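(* Let $n,g$ be integers with $0\leq g\leq \lfloor \frac{n-3}{2}\rfloor$, and let $G$ be a connected graph of order $n$. Then $G$ has an $R_g$-cutset with $\kappa_g(G)=2$ if and only if one of the following holds: (1) $\kappa(G)=2$ and there exist two vertices $u,v$ such that $G-\{u,v\}$ is disconnected and every connected component of $G-\{u,v\}$ has at least $g+1$ vertices; (2) $\kappa(G)=1$, $g\geq 1$, and both (a) for every cut vertex $u$ of $G$, some connected component of $G-u$ has at most $g$ vertices, and (b) either there exists a cut vertex $v$ such that $G-v$ has at least $3$ connected components, one of which consists of a single vertex and each of the others has at least $g+1$ vertices; or there exist two vertices $x,y$, neither of which is a cut vertex of $G$, such that $G-\{x,y\}$ is disconnected and every connected component of $G-\{x,y\}$ has at least $g+1$ vertices.
   Context: All graphs are finite and simple. $\kappa(G)$ denotes the usual vertex connectivity. A cut vertex of a connected graph $G$ is a vertex $v$ with $G-v$ disconnected. A set $S\subseteq V(G)$ is a cutset if $G-S$ is disconnected. For a non-negative integer $g$, a cutset $S$ is an $R_g$-cutset if every connected component of $G-S$ has at least $g+1$ vertices. If $G$ has at least one $R_g$-cutset, the $g$-extra connectivity $\kappa_g(G)$ is the minimum cardinality of an $R_g$-cutset of $G$. *)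

(* Defs.v *)
(* A simple graph is a symmetric irreflexive relation e on a finType T. *)
From mathcomp Require Import all_boot.
Set Implicit Arguments. Unset Strict Implicit. Unset Printing Implicit Defensive.

Section Graphs.
Variables (T : finType) (e : rel T).

Definition del_rel (S : {set T}) : rel T :=
  [rel a b | [&& a \notin S, b \notin S & e a b]].

Definition connected_graph : Prop := forall x y : T, connect e x y.

Definition cutset (S : {set T}) : bool :=
  [exists x, exists y, [&& x \notin S, y \notin S & ~~ connect (del_rel S) x y]].

Definition comp (S : {set T}) (x : T) : {set T} :=
  [set y | (y \notin S) && connect (del_rel S) x y].

Definition comps (S : {set T}) : {set {set T}} :=
  [set comp S x | x in ~: S].

Definition Rg_cutset (g : nat) (S : {set T}) : bool :=
  cutset S && [forall x, (x \notin S) ==> (g.+1 <= #|comp S x|)].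

(* vertex connectivity: minimum size of a cutset, or |V|-1 if there is none
   (complete graph) *)
Definition kappa : nat := \big[minn/#|T|.-1]_(S : {set T} | cutset S) #|S|.

(* g-extra connectivity: minimum size of an R_g-cutset (meaningful only when one
   exists; the default #|T| is never below the size of an actual cutset) *)
Definition kappa_g (g : nat) : nat :=
  \big[minn/#|T|]_(S : {set T} | Rg_cutset g S) #|S|.

Definition cut_vertex (v : T) : bool := cutset [set v].

End Graphs.

(* Main.v *)
Require Import Defs.
From mathcomp Require Import all_boot zify.
Set Implicit Arguments. Unset Strict Implicit. Unset Printing Implicit Defensive.

Section Aux.
Variables (T : finType) (e : rel T).
Hypothesis e_sym : symmetric e.

Lemma del_sym (S : {set T}) : symmetric (del_rel e S).
Proof. by move=> a b; rewrite /del_rel /= e_sym andbCA. Qed.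

Lemma connect_dsym (S : {set T}) x y : connect (del_rel e S) x y = connect (del_rel e S) y x.
Proof. exact: (sym_connect_sym (del_sym S)). Qed.

Lemma comp_in (S : {set T}) x : x \notin S -> x \in Defs.comp e S x.
Proof. by move=> hx; rewrite inE hx connect0. Qed.

Lemma comp_eq (S : {set T}) x y : y \in Defs.comp e S x -> Defs.comp e S y = Defs.comp e S x.
Proof.
rewrite inE => /andP[hy cxy]; apply/setP=> z; rewrite !inE.
case: (z \in S) => //=; apply/idP/idP.
- exact: connect_trans cxy.
- by move=> cxz; apply: connect_trans cxz; rewrite connect_dsym.
Qed.

Lemma connect_restr (e1 e2 : rel T) x y :
  (forall a b, connect e1 x a -> e1 a b -> e2 a b) -> connect e1 x y -> connect e2 x y.
Proof.
move=> H /connectP[p pth ->].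
have gen : forall p a, connect e1 x a -> connect e2 x a -> path e1 a p ->
    connect e2 x (last a p).
  elim=> [|b q IH] a c1 c2 //= /andP[eab pth'].
  apply: IH pth'.
  - exact: connect_trans c1 (connect1 eab).
  - exact: connect_trans c2 (connect1 (H _ _ c1 eab)).
by apply: gen; rewrite ?connect0.
Qed.

Lemma del_mono (S S' : {set T}) x y : S \subset S' ->
  connect (del_rel e S') x y -> connect (del_rel e S) x y.
Proof.
move=> sub; apply: connect_restr => a b _ /=.
case/and3P=> ha hb eab; rewrite /del_rel /= eab andbT.
by apply/andP; split; apply/negP => h; [move/negP: ha|move/negP: hb]; apply; apply: (subsetP sub).
Qed.

Lemma comp_sub2 (u v y : T) : y \notin [set u; v] -> v \notin Defs.comp e [set u] y ->
  Defs.comp e [set u; v] y = Defs.comp e [set u] y.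
Proof.
move=> hy hv; apply/setP=> z; apply/idP/idP.
- rewrite !inE => /andP[hz c]; rewrite negb_or in hz; case/andP: hz => -> _ /=.
  by apply: del_mono c; rewrite sub1set !inE eqxx.
- move=> hz; have hzv : z != v by apply: contraNneq hv => <-.
  move: hz; rewrite !inE => /andP[hzu c]; rewrite negb_or hzu hzv /=.
  apply: connect_restr c => a b cya /= /and3P[ha hb eab].
  have hav : a != v.
    by apply: contraNneq hv => <-; rewrite inE ha.
  have hbv : b != v.
    apply: contraNneq hv => <-; rewrite inE hb /=.
    by apply: connect_trans cya (connect1 _); rewrite /del_rel /= ha hb.
  move: ha hb; rewrite /del_rel /= !inE !negb_or => -> ->.
  by rewrite hav hbv eab.
Qed.

Lemma notin2 (u v z : T) : (z \notin [set u; v]) = (z != u) && (z != v).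
Proof. by rewrite !inE negb_or. Qed.

Lemma leaf (g : nat) (u v : T) : u != v -> Rg_cutset e g [set u; v] ->
  (exists2 C, C \in comps e [set u] & #|C| <= g) ->
  3 <= #|comps e [set u]| /\
  exists2 C, C \in comps e [set u] &
    #|C| = 1 /\ forall C', C' \in comps e [set u] -> C' != C -> g.+1 <= #|C'|.
Proof.
move=> neq /andP[cut /forallP big] [C /imsetP[x hx ->] small].
have Hbig z : z \notin [set u; v] -> g < #|Defs.comp e [set u; v] z|.
  by move=> hz; exact: (implyP (big z) hz).
have hvu : v \notin [set u] by rewrite inE eq_sym.
have hxu : x \notin [set u] by rewrite in_setC in hx.
have vcomp : Defs.comp e [set u] v = [set v].
  have vx : v \in Defs.comp e [set u] x.
    apply: contraTT small => hv.
    have hxv : x != v by apply: contraNneq hv => <-; exact: comp_in.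
    have hxS : x \notin [set u; v] by rewrite notin2 -(in_set1 x u) hxu hxv.
    by rewrite -ltnNge -(comp_sub2 hxS hv) Hbig.
  have E := comp_eq vx.
  apply/eqP; rewrite eqEsubset sub1set comp_in // andbT.
  apply/subsetP=> y hy; rewrite inE; apply/negPn/negP => hyv.
  have hyu : y != u by move: hy; rewrite !inE => /andP[].
  have hyS : y \notin [set u; v] by rewrite notin2 hyu hyv.
  have Hy := Hbig y hyS.
  have sub : v |: Defs.comp e [set u; v] y \subset Defs.comp e [set u] x.
    rewrite subUset sub1set -E comp_in //=.
    apply/subsetP=> z; rewrite !inE => /andP[hz c].
    rewrite negb_or in hz; case/andP: hz => -> _ /=.
    move: hy; rewrite !inE => /andP[_ cvy].
    apply: connect_trans cvy (del_mono _ c).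
    by rewrite sub1set !inE eqxx.
  have := subset_leq_card sub; rewrite cardsU1.
  have -> : v \notin Defs.comp e [set u; v] y by rewrite !inE eqxx orbT.
  move=> h; have := leq_trans h small; rewrite add1n.
  by move=> h2; have := leq_trans Hy (ltnW h2); rewrite ltnn.
have hgood z : z \notin [set u; v] ->
    Defs.comp e [set u] z = Defs.comp e [set u; v] z /\ Defs.comp e [set u] z != [set v].
  rewrite notin2 => /andP[hzu hzv].
  have hzu' : z \notin [set u] by rewrite inE.
  have hv : v \notin Defs.comp e [set u] z.
    apply/negP=> hv; have := comp_in hzu'.
    by rewrite -(comp_eq hv) vcomp inE (negbTE hzv).
  split; first by rewrite comp_sub2 // notin2 hzu hzv.
  apply/negP => /eqP h; have := comp_in hzu'.
  by rewrite h inE (negbTE hzv).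
have vin : [set v] \in comps e [set u].
  by rewrite -vcomp; apply: imset_f; rewrite in_setC.
split.
  case/existsP: cut => x1 /existsP[y1 /and3P[hx1 hy1 nc]].
  have [Ax1 Anv] := hgood _ hx1.
  have [By1 Bnv] := hgood _ hy1.
  have hx1u : x1 \in ~: [set u].
    by move: hx1; rewrite notin2 in_setC inE => /andP[].
  have hy1u : y1 \in ~: [set u].
    by move: hy1; rewrite notin2 in_setC inE => /andP[].
  apply/card_gt2P; exists [set v], (Defs.comp e [set u] x1), (Defs.comp e [set u] y1).
  split; first by rewrite vin !imset_f.
  split; first by rewrite eq_sym.
    apply/negP=> /eqP hAB; move/negP: nc; apply.
    have := comp_in hy1; rewrite -By1 -hAB Ax1 inE => /andP[].
    by [].
  by [].
exists [set v] => //; split; first by rewrite cards1.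
move=> C'; case/imsetP=> y hy -> hne.
have hyu : y != u by rewrite in_setC inE in hy.
have hyv : y != v by apply: contraNneq hne => ->; rewrite vcomp.
have hyS : y \notin [set u; v] by rewrite notin2 hyu hyv.
have [-> _] := hgood y hyS.
exact: Hbig.
Qed.
End Aux.

Lemma bigmin_le_seq (I : eqType) (P : pred I) (F : I -> nat) d i (r : seq I) :
  i \in r -> P i -> \big[minn/d]_(j <- r | P j) F j <= F i.
Proof.
elim: r => [|a r IH] //=; rewrite inE big_cons => /orP[/eqP <-|ir] Pi.
  by rewrite Pi geq_minl.
by case: (P a); [rewrite geq_min IH ?orbT | exact: IH].
Qed.

Lemma bigmin_le (I : finType) (P : pred I) (F : I -> nat) d i :
  P i -> \big[minn/d]_(j | P j) F j <= F i.
Proof. exact: bigmin_le_seq (mem_index_enum i). Qed.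

Lemma bigmin_ge (I : finType) (P : pred I) (F : I -> nat) d k :
  k <= d -> (forall j, P j -> k <= F j) -> k <= \big[minn/d]_(j | P j) F j.
Proof.
move=> kd H; apply: (big_ind (fun x => k <= x)) => //.
  by move=> x y hx hy; rewrite leq_min hx hy.
Qed.

Lemma bigmin_wit (I : finType) (P : pred I) (F : I -> nat) d :
  \big[minn/d]_(j | P j) F j = d \/
  exists2 j, P j & \big[minn/d]_(j | P j) F j = F j.
Proof.
apply: (big_ind (fun x => x = d \/ exists2 j, P j & x = F j)); first by left.
  move=> x y hx hy /=; case: (leqP x y) => h.
    exact: hx.
  exact: hy.
by move=> j Pj; right; exists j.
Qed.

Lemma cut_nonempty (T : finType) (e : rel T) (S : {set T}) :
  connected_graph e -> cutset e S -> 0 < #|S|.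
Proof.
move=> hc; rewrite card_gt0; apply: contraTneq => ->.
apply/negP=> /existsP[x /existsP[y /and3P[_ _ /negP nc]]]; apply: nc.
apply: connect_restr (hc x y) => a b _ eab.
by rewrite /del_rel /= !inE eab.
Qed.

Lemma two_comps (T : finType) (e : rel T) (e_sym : symmetric e) (g : nat) (w x : T) :
  w != x -> Defs.comp e [set w] x = [set x] ->
  (forall C', C' \in comps e [set w] -> C' != [set x] -> g.+1 <= #|C'|) ->
  2 < #|comps e [set w]| -> Rg_cutset e g [set w; x].
Proof.
move=> neq cx hoth h3.
have hgood z : z \notin [set w; x] ->
    Defs.comp e [set w] z = Defs.comp e [set w; x] z /\ Defs.comp e [set w] z != [set x].
  rewrite notin2 => /andP[hzw hzx].
  have hzw' : z \notin [set w] by rewrite inE.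
  have hv : x \notin Defs.comp e [set w] z.
    apply/negP=> hv; have := comp_in e hzw'.
    by rewrite -(comp_eq e_sym hv) cx inE (negbTE hzx).
  split; first by rewrite comp_sub2 // notin2 hzw hzx.
  apply/negP => /eqP h; have := comp_in e hzw'.
  by rewrite h inE (negbTE hzx).
have hmem D : D \in comps e [set w] -> D != [set x] ->
    exists2 z, z \notin [set w; x] & D = Defs.comp e [set w] z.
  case/imsetP=> z hz -> hne; exists z => //.
  rewrite notin2; rewrite in_setC inE in hz; rewrite hz /=.
  by apply: contraNneq hne => ->; rewrite cx.
have [D1 [D2 [D1in D2in [D1C D2C D12]]]] : exists D1 D2,
    [/\ D1 \in comps e [set w], D2 \in comps e [set w] &
        [/\ D1 != [set x], D2 != [set x] & D1 != D2]].
  case/card_gt2P: h3 => a [b [c [[ain bin cin] [ab bc ca]]]].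
  case: (eqVneq a [set x]) => [aC|aC].
    have h1 : b != [set x] by rewrite -aC eq_sym.
    have h2 : c != [set x] by rewrite -aC.
    by exists b, c.
  case: (eqVneq b [set x]) => [bC|bC].
    have h2 : c != [set x] by rewrite -bC eq_sym.
    have h3 : a != c by rewrite eq_sym.
    by exists a, c.
  by exists a, b.
apply/andP; split.
  have [z1 hz1 E1] := hmem _ D1in D1C.
  have [z2 hz2 E2] := hmem _ D2in D2C.
  apply/existsP; exists z1; apply/existsP; exists z2; rewrite hz1 hz2 /=.
  apply/negP=> c; move/negP: D12; apply; apply/eqP.
  have [A1 _] := hgood _ hz1.
  have : z2 \in Defs.comp e [set w; x] z1 by rewrite inE hz2.
  by rewrite -A1 E1 E2 => /comp_eq ->.
apply/forallP=> z; apply/implyP=> hz.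
have [<- ne] := hgood _ hz.
apply: hoth ne; apply: imset_f.
by move: hz; rewrite notin2 in_setC inE => /andP[].
Qed.

Theorem theorem4p1 (T : finType) (e : rel T)
  (e_sym : symmetric e) (e_irr : irreflexive e)
  (n g : nat) (hn : #|T| = n) (hn3 : 3 <= n) (hg : g <= (n - 3)./2)
  (hconn : connected_graph e) :
  ((exists S : {set T}, Rg_cutset e g S) /\ kappa_g e g = 2)
  <->
  ( (kappa e = 2 /\
       exists u v : T, u != v /\ Rg_cutset e g [set u; v])
    \/
    (kappa e = 1 /\ 1 <= g /\
       (forall u : T, cut_vertex e u ->
          exists2 C, C \in comps e [set u] & #|C| <= g) /\
       ((exists v : T, cut_vertex e v /\ 3 <= #|comps e [set v]| /\
           exists2 C, C \in comps e [set v] &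
             #|C| = 1 /\
             forall C', C' \in comps e [set v] -> C' != C -> g.+1 <= #|C'|)
        \/
        (exists x y : T, x != y /\ ~~ cut_vertex e x /\ ~~ cut_vertex e y /\
           Rg_cutset e g [set x; y])))).
Proof.
have Rg_cut S : Rg_cutset e g S -> cutset e S by case/andP.
have kap_le S : cutset e S -> kappa e <= #|S|.
  by move=> h; apply: bigmin_le.
have kapg_le S : Rg_cutset e g S -> kappa_g e g <= #|S|.
  by move=> h; apply: bigmin_le.
have kap_ge1 : 1 <= kappa e.
  apply: bigmin_ge; first by rewrite hn; lia.
  by move=> S; apply: cut_nonempty.
split.
- case=> [[S0 hS0] kg2].
  have Kg_le S : Rg_cutset e g S -> 2 <= #|S| by rewrite -kg2; apply: kapg_le.
  have [hd|[S hS hSz]] := bigmin_wit (fun S => Rg_cutset e g S) (fun S => #|S|) #|T|.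
    by move: kg2; rewrite /kappa_g hd hn => h; move: hn3; rewrite h.
  have /cards2P[u [v [neq Suv]]] : #|S| == 2 by rewrite -hSz -/(kappa_g e g) kg2.
  subst S.
  have k2 : kappa e <= 2.
    by have := kap_le _ (Rg_cut _ hS); rewrite cards2 neq.
  have [ek|ek] : kappa e = 1 \/ kappa e = 2.
    by case: (kappa e) kap_ge1 k2 => [|[|[|]]] //; [left|right].
  2: by left; split=> //; exists u, v.
  right; split=> //.
  have [hd|[S1 hS1 hS1z]] := bigmin_wit (fun S => cutset e S) (fun S => #|S|) #|T|.-1.
    by move: ek; rewrite /kappa hd hn; lia.
  have /cards1P[w Sw] : #|S1| == 1 by rewrite -hS1z -/(kappa e) ek.
  subst S1.
  have hA : forall u0 : T, cut_vertex e u0 ->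
      exists2 C, C \in comps e [set u0] & #|C| <= g.
    move=> u0 cu0.
    case: (boolP [exists C in comps e [set u0], #|C| <= g]).
      by case/existsP=> C /andP[h1 h2]; exists C.
    move=> hn0; have : Rg_cutset e g [set u0].
      apply/andP; split; first exact: cu0.
      apply/forallP=> z; apply/implyP=> hz.
      rewrite ltnNge; apply: contra hn0 => hle; apply/existsP.
      exists (Defs.comp e [set u0] z); rewrite hle andbT; apply: imset_f.
      by rewrite in_setC.
    by move/Kg_le; rewrite cards1.
  split.
    case: (posnP g) => // g0.
    have Kg0 := Kg_le; rewrite g0 in Kg0.
    have : Rg_cutset e 0 [set w].
      apply/andP; split; first exact: hS1.
      apply/forallP=> z; apply/implyP=> hz.
      by rewrite card_gt0; apply/set0Pn; exists z; exact: (comp_in e hz).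
    by move/Kg0; rewrite cards1.
  split=> //.
  case: (boolP (cut_vertex e u)) => cu.
    by left; exists u; split=> //; exact: (leaf e_sym neq hS (hA u cu)).
  case: (boolP (cut_vertex e v)) => cv.
    have neq' : v != u by rewrite eq_sym.
    have hS' : Rg_cutset e g [set v; u] by rewrite setUC.
    by left; exists v; split=> //; exact: (leaf e_sym neq' hS' (hA v cv)).
  by right; exists u, v.
- have lower : (forall S, Rg_cutset e g S -> 2 <= #|S|) -> 2 <= kappa_g e g.
    move=> H; apply: bigmin_ge => //.
    by rewrite hn; lia.
  case=> [[k2 [u [v [neq hR]]]]|[k1 [g1 [hA hB]]]].
    split; first by exists [set u; v].
    apply/anti_leq; rewrite lower ?andbT.
      by have := kapg_le _ hR; rewrite cards2 neq.
    by move=> S hS; rewrite -k2; apply: kap_le; apply: Rg_cut.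
  have [S2 hS2 hS2z] : exists2 S2, Rg_cutset e g S2 & #|S2| = 2.
    case: hB => [[w [cw [h3 [C Cin [c1 hoth]]]]]|[x [y [neq [_ [_ hR]]]]]].
      case/imsetP: Cin => x hx CE.
      have hxw : x \notin [set w] by rewrite in_setC in hx.
      have Cx : C = [set x].
        apply/esym/eqP; rewrite eqEcard sub1set c1 cards1 leqnn andbT CE.
        exact: (comp_in e hxw).
      have neq : w != x by rewrite inE eq_sym in hxw.
      exists [set w; x]; last by rewrite cards2 neq.
      apply: two_comps => //; first by rewrite -CE.
      by rewrite -Cx.
    by exists [set x; y]; last by rewrite cards2 neq.
  split; first by exists S2.
  apply/anti_leq; rewrite lower ?andbT.
    by rewrite -hS2z; apply: kapg_le.
  move=> S hS; have := cut_nonempty hconn (Rg_cut _ hS).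
  rewrite leq_eqVlt => /orP[/eqP h1|] //.
  move/esym/eqP: h1 => /cards1P[w Sw]; subst S.
  have [C /imsetP[x hx ->] small] := hA w (Rg_cut _ hS).
  case/andP: hS => _ /forallP /(_ x) /implyP.
  by rewrite -in_setC => /(_ hx); rewrite ltnNge small.
Qed.
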